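(* $f_3(6,5)=4=\rho_3(T(8,4))$, where $T(8,4)$ is the complete $4$-partite graph with all parts of size $2$.
   Context: $\mathcal{G}(\Delta,\omega)$ denotes the class of finite simple graphs $G$ with maximum degree $\Delta(G)\le\Delta$ and clique number $\omega(G)\le\omega$. $k_t(G)$ is the number of copies of $K_t$ in $G$ and $\rho_t(G)=k_t(G)/|V(G)|$. $f_t(\Delta,\omega)=\sup\{\rho_t(G): G\in\mathcal{G}(\Delta,\omega),\ |V(G)|\ge 1\}$. *)

(* Defs.v *)
From HB Require Import structures.
From mathcomp Require Import all_boot all_order all_algebra.
Set Implicit Arguments. Unset Strict Implicit. Unset Printing Implicit Defensive.
Import Order.TTheory GRing.Theory Num.Theory.

Definition simple_graph (T : finType) (e : rel T) : Prop :=
  symmetric e /\ irreflexive e.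

Definition is_clique (T : finType) (e : rel T) (S : {set T}) : bool :=
  [forall x in S, forall y in S, (x != y) ==> e x y].

Definition max_deg_le (T : finType) (e : rel T) (D : nat) : Prop :=
  forall x : T, #|[set y | e x y]| <= D.

Definition clique_num_le (T : finType) (e : rel T) (w : nat) : Prop :=
  forall S : {set T}, is_clique e S -> #|S| <= w.

Definition k_t (T : finType) (e : rel T) (t : nat) : nat :=
  #|[set S : {set T} | is_clique e S && (#|S| == t)]|.

Definition rho_t (T : finType) (e : rel T) (t : nat) : rat :=
  (k_t e t)%:R / #|T|%:R.

Definition in_class (T : finType) (e : rel T) (D w : nat) : Prop :=
  simple_graph e /\ max_deg_le e D /\ clique_num_le e w /\ 0 < #|T|.

Definition is_f_t (t D w : nat) (r : rat) : Prop :=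
  (forall (T : finType) (e : rel T), in_class e D w -> (rho_t e t <= r)%R) /\
  (forall r' : rat,
     (forall (T : finType) (e : rel T), in_class e D w -> (rho_t e t <= r')%R) ->
     (r <= r')%R).

(* T(8,4): complete 4-partite graph with parts {0,1},{2,3},{4,5},{6,7}. *)
Definition T84_rel : rel 'I_8 := fun x y => (val x %/ 2 != val y %/ 2)%N.

(* Main.v *)
Require Import Defs.
From mathcomp Require Import all_boot all_order all_algebra zify.
Set Implicit Arguments. Unset Strict Implicit. Unset Printing Implicit Defensive.
Import Order.TTheory GRing.Theory Num.Theory.

Lemma card_sumb (X : finType) (A : {pred X}) : #|A| = \sum_x (x \in A : nat).
Proof. rewrite -sum1_card big_mkcond /=. apply: eq_bigr => x _. by case: (x \in A). Qed.

Section G.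
Variables (T : finType) (e : rel T).
Hypothesis esym : symmetric e.
Hypothesis eirr : irreflexive e.

Definition Nb u := [set x | e u x].
Definition tri u := #|[set S : {set T} | is_clique e S && (#|S| == 3) && (u \in S)]|.

Lemma sum_tri : \sum_u tri u = 3 * k_t e 3.
Proof.
rewrite /tri /k_t.
transitivity (\sum_u \sum_(S : {set T}) ((is_clique e S && (#|S| == 3)) && (u \in S) : nat)).
  apply: eq_bigr => u _; rewrite card_sumb; apply: eq_bigr => S _; by rewrite inE.
rewrite exchange_big /= [X in _ = 3 * X]card_sumb big_distrr /=.
apply: eq_bigr => S _. rewrite inE.
case: (boolP (is_clique e S && (#|S| == 3))) => /= H.
  move: H => /andP [_ /eqP H3]. by rewrite muln1 -H3 card_sumb.
by rewrite big1.
Qed.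

Lemma cliqueP (S : {set T}) :
  reflect (forall x y, x \in S -> y \in S -> x != y -> e x y) (is_clique e S).
Proof.
apply: (iffP forallP) => [H x y xS yS nxy | H x].
  by move: (H x) => /implyP/(_ xS)/forallP/(_ y)/implyP/(_ yS)/implyP/(_ nxy).
apply/implyP => xS; apply/forallP => y; apply/implyP => yS; apply/implyP.
exact: H.
Qed.


Lemma card3 (x y z : T) : x != y -> x != z -> y != z -> #|[set x; y; z]| = 3.
Proof.
move=> xy xz yz. rewrite (@eq_card _ _ (mem [:: x; y; z])); last by move=> w; rewrite !inE ?orbA ?orbF.
apply/card_uniqP. by rewrite /= !inE negb_or xy xz yz.
Qed.

Lemma per_a u a :
  #|[pred S : {set T} | ((is_clique e S && (#|S| == 3)) && (u \in S)) && (a \in S :\ u)]|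
  = if a \in Nb u then #|Nb u :&: Nb a| else 0.
Proof.
case: ifP => aN.
  have au : a != u by apply: contraTneq aN => ->; rewrite inE eirr.
  rewrite -(@card_in_imset _ _ (fun b => [set u; a; b])); last first.
    move=> b b' /=; rewrite !inE => /andP [ub ab] /andP [ub' ab'] E.
    have : b \in [set u; a; b'] by rewrite -E !inE eqxx !orbT.
    rewrite !inE => /orP [/orP [/eqP bu|/eqP ba]| /eqP //].
      by move: ub; rewrite bu eirr.
    by move: ab; rewrite ba eirr.
  apply: eq_card => S. rewrite !inE.
  apply/idP/imsetP.
    case/and3P => /andP [/andP [cS /eqP S3] uS] au' aS.
    have : #|S :\ u :\ a| == 1.
      move: (S3); rewrite (cardsD1 u S) uS (cardsD1 a (S :\ u)) !inE au aS /= => /eqP.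
      by rewrite !add1n !eqSS.
    case/cards1P => b Hb.
    have bS : b \in S :\ u :\ a by rewrite Hb inE.
    move: bS; rewrite !inE => /andP [ba /andP [bu bS]].
    exists b.
      by rewrite !inE (cliqueP _ cS u b) ?(cliqueP _ cS a b) // eq_sym.
    have ua : u != a by rewrite eq_sym.
    have ub : u != b by rewrite eq_sym.
    have ab : a != b by rewrite eq_sym.
    apply/eqP; rewrite eq_sym eqEcard S3 card3 // leqnn andbT.
    apply/subsetP => x; rewrite !inE -orbA => /or3P [] /eqP -> //.
  case=> b; rewrite !inE => /andP [ub ab] ->.
  have bu : b != u by apply: contraTneq ub => ->; rewrite eirr.
  have ba : b != a by apply: contraTneq ab => ->; rewrite eirr.
  have ua : u != a by rewrite eq_sym.
  have ub' : u != b by rewrite eq_sym.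
  have ab' : a != b by rewrite eq_sym.
  rewrite card3 // eqxx andbT au !inE eqxx ?orbT /= ?andbT.
  rewrite eqxx orbT andbT.
  apply/cliqueP => x y; rewrite !inE -!orbA => Hx Hy xy.
  move: aN; rewrite inE => uaN.
  move: xy; case/or3P: Hx => /eqP ->; case/or3P: Hy => /eqP -> /eqP xy;
    try (by exfalso; apply: xy); by rewrite ?uaN ?ub ?ab // esym ?uaN ?ub ?ab.
apply: eq_card0 => S; rewrite !inE.
apply/negbTE; apply/negP => /andP [/andP [/andP [cS _] uS] /andP [au aS]].
by move: aN; rewrite inE (cliqueP _ cS u a) // eq_sym.
Qed.


Lemma two_tri u : 2 * tri u = \sum_(a in Nb u) #|Nb u :&: Nb a|.
Proof.
rewrite /tri [X in 2 * X]card_sumb big_distrr /=.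
transitivity (\sum_(S : {set T}) \sum_a
  ((((is_clique e S && (#|S| == 3)) && (u \in S)) && (a \in S :\ u)) : nat)).
  apply: eq_bigr => S _. rewrite inE.
  case: (boolP ((is_clique e S && (#|S| == 3)) && (u \in S))) => H /=.
    rewrite muln1 -card_sumb.
    move: H => /andP [/andP [_ /eqP S3] uS].
    by move: S3; rewrite (cardsD1 u S) uS add1n => [[]].
  by rewrite big1.
rewrite exchange_big /= [RHS]big_mkcond /=. apply: eq_bigr => a _.
by rewrite -card_sumb per_a.
Qed.


Definition Q u := [set p : T * T | [&& p.1 \in Nb u, p.2 \in Nb u, p.1 != p.2 & ~~ e p.1 p.2]].

Lemma Q_sum u : #|Q u| = \sum_(a in Nb u) #|(Nb u :\ a) :\: Nb a|.
Proof.
rewrite card_sumb.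
transitivity (\sum_p ((fun a b => ([&& a \in Nb u, b \in Nb u, a != b & ~~ e a b] : nat)) p.1 p.2)).
  by apply: eq_bigr => p _; rewrite inE.
rewrite -(pair_bigA _ (fun a b => ([&& a \in Nb u, b \in Nb u, a != b & ~~ e a b] : nat))) /= [RHS]big_mkcond /=. apply: eq_bigr => a _.
case: (boolP (a \in Nb u)) => aN /=; last by rewrite big1.
rewrite card_sumb; apply: eq_bigr => b _; rewrite !inE.
by rewrite (eq_sym b a); case: (e u b); case: (a != b); case: (e a b).
Qed.

Lemma tri_Q u : 2 * tri u + #|Q u| = #|Nb u| * (#|Nb u|).-1.
Proof.
rewrite two_tri Q_sum -big_split /= -sum_nat_const.
apply: eq_bigr => a aN.
have -> : Nb u :&: Nb a = (Nb u :\ a) :&: Nb a.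
  apply/setP => x; rewrite !inE.
  by case: (boolP (x == a)) => // /eqP ->; rewrite eirr andbF.
by rewrite cardsID (cardsD1 a (Nb u)) aN.
Qed.


Lemma QP u x y : ((x, y) \in Q u) = [&& x \in Nb u, y \in Nb u, x != y & ~~ e x y].
Proof. by rewrite inE. Qed.

Lemma Qsym u x y : (x, y) \in Q u -> (y, x) \in Q u.
Proof. by rewrite !QP esym eq_sym => /and4P [-> -> -> ->]. Qed.

Lemma Q_ge u (s : seq (T * T)) : uniq s -> all (fun p => p \in Q u) s -> size s <= #|Q u|.
Proof.
move=> us /allP sQ. rewrite -(card_uniqP us). apply: subset_leq_card.
by apply/subsetP => p /sQ.
Qed.

Lemma Q_le u (s : seq (T * T)) : (forall p, p \in Q u -> p \in s) -> #|Q u| <= size s.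
Proof.
move=> H. apply: leq_trans (card_size s). apply: subset_leq_card.
by apply/subsetP => p /H.
Qed.

Lemma Nb_sym u v : (u \in Nb v) = (v \in Nb u).
Proof. by rewrite !inE esym. Qed.

Lemma Nb_neq u v : u \in Nb v -> u != v.
Proof. by rewrite inE; apply: contraTneq => ->; rewrite eirr. Qed.

End G.

Ltac neqs_rw := repeat match goal with
  | H : is_true (?a != ?b) |- context [?a == ?b] => rewrite (negbTE H)
  | H : is_true (?a != ?b) |- context [?b == ?a] => rewrite (eq_sym b a) (negbTE H)
  end.
Ltac solve_uniq := rewrite /= !inE ?xpair_eqE; neqs_rw; rewrite ?eqxx /= ?andbF ?andFb ?orbF ?orFb /=.

Ltac bool_rw := repeat match goal with
  | H : is_true (~~ ?b) |- context [?b] => rewrite (negbTE H)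
  | H : is_true ?b |- context [?b] => rewrite H
  end.
Ltac notin_tac := rewrite !in_cons in_nil ?xpair_eqE; neqs_rw; rewrite ?eqxx /= ?andbF ?andFb ?orbF ?orFb /=.

Section K.
Variables (T : finType) (e : rel T).
Hypothesis esym : symmetric e.
Hypothesis eirr : irreflexive e.
Hypothesis Hdeg : forall x, #|Nb e x| <= 6.
Hypothesis Hcl : forall S : {set T}, is_clique e S -> #|S| <= 5.

Local Notation Nb := (Nb e).
Local Notation Q := (Q e).
Local Notation tri := (tri e).

Lemma LK u a : #|Nb u| = 6 -> a \in Nb u ->
  exists x y, [/\ (x, y) \in Q u, x != a & y != a].
Proof.
move=> d6 aN.
case: (boolP [exists p in Q u, (p.1 != a) && (p.2 != a)]).
  case/exists_inP => [[x y]] /= xyQ /andP [xa ya]. by exists x, y.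
move=> H; exfalso.
have: is_clique e (u |: (Nb u :\ a)).
  apply/cliqueP => x y; rewrite !inE => /orP [/eqP ->|/andP [xa ux]] /orP [/eqP ->|/andP [ya uy]];
    rewrite ?eqxx // => xy.
  - by rewrite esym.
  case: (boolP (e x y)) => // nxy; exfalso; move/negP: H; apply; apply/exists_inP; exists (x, y) => /=.
    by rewrite QP !inE ux uy xy nxy.
  by rewrite xa ya.
move/Hcl. rewrite cardsU1 !inE eirr andbF /=.
have := cardsD1 a (Nb u). by rewrite aN d6 add1n => [[<-]].
Qed.



Lemma QE u x y : (x, y) \in Q u -> [/\ x \in Nb u, y \in Nb u, x != y & ~~ e x y].
Proof. by rewrite QP => /and4P. Qed.

Lemma tri_small u : #|Nb u| <= 5 -> tri u <= 10.
Proof.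
move=> hd. have TQ := tri_Q esym eirr u.
move: TQ hd; move: (#|Nb u|) (#|Q u|) (tri u) => d q t.
case: d => [|[|[|[|[|[|d]]]]]] //= ; lia.
Qed.

Lemma tri_le13 u : tri u <= 13.
Proof.
have TQ := tri_Q esym eirr u.
case: (ltnP #|Nb u| 6) => hd; first by apply: leq_trans (tri_small hd) _.
have d6 : #|Nb u| = 6 by apply/eqP; rewrite eqn_leq Hdeg hd.
have [a aN] : exists a, a \in Nb u by apply/set0Pn; rewrite -card_gt0 d6.
have [x [y [xyQ xa ya]]] := LK d6 aN.
have [xN yN xy nxy] := QE xyQ.
have [z [w [zwQ zx wx]]] := LK d6 xN.
have [zN wN zw nzw] := QE zwQ.
have hq : 4 <= #|Q u|.
  apply: (Q_ge (s:=[:: (x,y);(y,x);(z,w);(w,z)])); first by solve_uniq.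
  by rewrite /= xyQ zwQ (Qsym esym xyQ) (Qsym esym zwQ).
move: TQ hq; rewrite d6; move: (tri u) (#|Q u|) => t q; clear. lia.
Qed.


Definition Struct u x y z w :=
  [/\ #|Nb u| = 6, [/\ x \in Nb u, y \in Nb u, z \in Nb u & w \in Nb u],
      [/\ x != y, z != w & [/\ x != z, x != w, y != z & y != w]],
      ~~ e x y /\ ~~ e z w
    & forall p, p \in Q u -> p \in [:: (x,y);(y,x);(z,w);(w,z)]].

Lemma d6_of u : 12 < tri u -> #|Nb u| = 6.
Proof.
move=> ht. case: (ltnP #|Nb u| 6) => hd.
  by have := tri_small hd; move: ht; move: (tri u) => t; clear; lia.
by apply/eqP; rewrite eqn_leq Hdeg hd.
Qed.

Lemma struct_ex u : tri u = 13 -> exists x y z w, Struct u x y z w.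
Proof.
move=> t13.
have TQ := tri_Q esym eirr u.
have d6 : #|Nb u| = 6 by apply: d6_of; rewrite t13.
have q4 : #|Q u| = 4 by move: TQ; rewrite t13 d6; move: (#|Q u|) => q; clear; lia.
have [a aN] : exists a, a \in Nb u by apply/set0Pn; rewrite -card_gt0 d6.
have [x [y [xyQ xa ya]]] := LK d6 aN.
have [xN yN xy nxy] := QE xyQ.
have [z [w [zwQ zx wx]]] := LK d6 xN.
have [zN wN zw nzw] := QE zwQ.
set s := [:: (x,y);(y,x);(z,w);(w,z)].
have us : uniq s by rewrite /s; solve_uniq.
have sQ : mem s \subset Q u.
  apply/subsetP => p; rewrite /s !in_cons in_nil orbF => /or4P [] /eqP ->;
    by rewrite ?xyQ ?zwQ ?(Qsym esym xyQ) ?(Qsym esym zwQ).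
have Qs : forall p, p \in Q u -> p \in s.
  have : #|mem s| = #|Q u| by rewrite q4 (card_uniqP us).
  move/subset_cardP => /(_ sQ) E p. by rewrite -E.
have [p1 [p2 [pQ p1y p2y]]] := LK d6 yN.
have : (p1, p2) \in s := Qs _ pQ.
rewrite /s !inE !xpair_eqE.
case/or4P => /andP [/eqP e1 /eqP e2]; subst p1 p2.
- by rewrite eqxx in p2y.
- by rewrite eqxx in p1y.
- exists x, y, z, w; split => //.
  by split => //; split; rewrite // eq_sym.
- exists x, y, z, w; split => //.
  by split => //; split; rewrite // eq_sym.
Qed.


Lemma struct_sw1 u x y z w : Struct u x y z w -> Struct u y x z w.
Proof.
case=> d6 [xN yN zN wN] [xy zw [xz xw yz yw]] [nxy nzw] Qs; split => //.
- by rewrite eq_sym.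
- by rewrite esym.
move=> p /Qs; rewrite !in_cons in_nil.
by case: (p == (x,y)); case: (p == (y,x)).
Qed.

Lemma struct_sw2 u x y z w : Struct u x y z w -> Struct u z w x y.
Proof.
case=> d6 [xN yN zN wN] [xy zw [xz xw yz yw]] [nxy nzw] Qs; split => //.
- by split => //; split; rewrite // eq_sym.
move=> p /Qs; rewrite !in_cons in_nil.
by case: (p == (x,y)); case: (p == (y,x)); case: (p == (z,w)); case: (p == (w,z)).
Qed.

Lemma struct_adj u x y z w a b : Struct u x y z w -> a \in Nb u -> b \in Nb u -> a != b ->
  (a, b) \notin [:: (x,y);(y,x);(z,w);(w,z)] -> e a b.
Proof.
case=> _ _ _ _ Qs aN bN ab ns. case: (boolP (e a b)) => // nab.
have : (a, b) \in Q u by rewrite QP aN bN ab nab.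
by move/Qs; rewrite (negbTE ns).
Qed.

Lemma struct_g u x y z w g : Struct u x y z w -> g \in Nb u -> g \notin [:: x; y; z; w] ->
  Nb g = u |: (Nb u :\ g) /\ tri g = 13.
Proof.
move=> S gN gs.
have S' := S.
case: S' => d6 [xN yN zN wN] [xy zw [xz xw yz yw]] [nxy nzw] Qs.
have adj : forall b, b \in Nb u -> b != g -> e g b.
  move=> b bN bg; apply: (struct_adj S gN bN); first by rewrite eq_sym.
  move: gs; rewrite !in_cons in_nil !xpair_eqE.
  by case: (g == x); case: (g == y); case: (g == z); case: (g == w); rewrite ?andbF.
have sub : u |: (Nb u :\ g) \subset Nb g.
  apply/subsetP => b; rewrite in_setU1 in_setD1 => /orP [/eqP ->|/andP [bg bN]].
    by rewrite (Nb_sym esym).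
  by rewrite inE adj.
have card6 : #|u |: (Nb u :\ g)| = 6.
  have uNu : (u \in Nb u) = false by rewrite inE eirr.
  rewrite cardsU1 in_setD1 uNu andbF /=.
  by have := cardsD1 g (Nb u); rewrite gN d6 add1n => [[<-]].
have E : Nb g = u |: (Nb u :\ g).
  by apply/eqP; rewrite eq_sym eqEcard sub card6 Hdeg.
split => //.
have TQ := tri_Q esym eirr g.
have hq : #|Q g| <= size [:: (x,y);(y,x);(z,w);(w,z)].
  apply: Q_le => -[a b] /QE [aN bN ab nab].
  move: aN bN; rewrite E !in_setU1 !in_setD1.
  case/orP => [/eqP au | /andP [ag aN]].
    case/orP => [/eqP bu | /andP [bg bN]]; first by move: ab; rewrite au bu eqxx.
    by move: nab bN; rewrite au inE => /negbTE ->.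
  case/orP => [/eqP bu | /andP [bg bN]].
    by move: nab aN; rewrite bu inE esym => /negbTE ->.
  by apply: Qs; rewrite QP aN bN ab nab.
have ht := tri_le13 g.
move: TQ hq ht; rewrite E card6 /=; move: (tri g) (#|Q g|) => t q; clear; lia.
Qed.


Lemma card_uniq_set (s : seq T) : uniq s -> #|[set v in s]| = size s.
Proof. move=> us; rewrite cardsE; exact/card_uniqP. Qed.

Lemma struct_bad u x y z w : Struct u x y z w -> tri x <= 11.
Proof.
move=> S. have S' := S.
case: S' => d6 [xN yN zN wN] [xy zw [xz xw yz yw]] [nxy nzw] Qs.
have exz : e x z by apply: (struct_adj S xN zN xz); notin_tac.
have exw : e x w by apply: (struct_adj S xN wN xw); notin_tac.
have TQ := tri_Q esym eirr x.
case: (ltnP #|Nb x| 6) => hd; first by apply: leq_trans (tri_small hd) _.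
have dx6 : #|Nb x| = 6 by apply/eqP; rewrite eqn_leq Hdeg hd.
set X := [set v in [:: x; y; z; w]].
have X4 : #|X| = 4 by rewrite card_uniq_set //; solve_uniq.
have XN : X \subset Nb u by apply/subsetP => v; rewrite in_set !in_cons in_nil orbF => /or4P [] /eqP ->.
have R2 : #|Nb u :\: X| == 2.
  by move: (cardsID X (Nb u)); rewrite (setIidPr XN) X4 d6; move: (#|Nb u :\: X|) => k; clear; lia.
case/cards2P: R2 => g1 [g2 [g12 RE]].
have : g1 \in Nb u :\: X by rewrite RE !inE eqxx.
rewrite in_setD => /andP [g1X g1N].
have : g2 \in Nb u :\: X by rewrite RE !inE eqxx orbT.
rewrite in_setD => /andP [g2X g2N].
have g1X' : g1 \notin [:: x; y; z; w] by move: g1X; rewrite inE.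
have [Ng1 _] := struct_g S g1N g1X'.
have g2X' : g2 \notin [:: x; y; z; w] by move: g2X; rewrite inE.
have [Ng2 _] := struct_g S g2N g2X'.
move: (g1X'); rewrite !in_cons in_nil orbF !negb_or => /and4P [g1x g1y g1z g1w].
move: (g2X'); rewrite !in_cons in_nil orbF !negb_or => /and4P [g2x g2y g2z g2w].
have xu := Nb_neq eirr xN. have zu := Nb_neq eirr zN. have wu := Nb_neq eirr wN.
have g1u := Nb_neq eirr g1N. have g2u := Nb_neq eirr g2N.
have exg1 : e x g1.
  have : x \in Nb g1 by rewrite Ng1 in_setU1 in_setD1 xN (eq_sym x g1) g1x orbT.
  by rewrite inE esym.
have exg2 : e x g2.
  have : x \in Nb g2 by rewrite Ng2 in_setU1 in_setD1 xN (eq_sym x g2) g2x orbT.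
  by rewrite inE esym.
have exu : e x u by rewrite esym -(@in_set _ (e u)).
set K := [set v in [:: u; z; w; g1; g2]].
have K5 : #|K| = 5 by rewrite card_uniq_set //; solve_uniq.
have KN : K \subset Nb x.
  by apply/subsetP => v; rewrite in_set !in_cons in_nil orbF => /orP [/eqP -> | /or4P [] /eqP ->]; rewrite inE.
have : 0 < #|Nb x :\: K|.
  by move: (cardsID K (Nb x)); rewrite (setIidPr KN) K5 dx6; move: (#|Nb x :\: K|) => k; clear; lia.
case/card_gt0P => p; rewrite in_setD => /andP [pK pNx].
move: pK; rewrite in_set !in_cons in_nil orbF !negb_or => /and5P [pu pz pw pg1 pg2].
have pNu : p \notin Nb u.
  apply/negP => pN.
  case: (boolP (p \in X)) => pX.
    move: pX; rewrite in_set !in_cons in_nil orbF => /or4P [] /eqP pe.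
    - by move: (Nb_neq eirr pNx); rewrite pe eqxx.
    - by move: pNx nxy; rewrite pe inE => ->.
    - by rewrite pe eqxx in pz.
    - by rewrite pe eqxx in pw.
  have : p \in Nb u :\: X by rewrite in_setD pX pN.
  by rewrite RE !inE (negbTE pg1) (negbTE pg2).
have nup : ~~ e u p by move: pNu; rewrite inE.
have npu : ~~ e p u by rewrite esym.
have ng1p : ~~ e g1 p.
  apply/negP => h; have : p \in Nb g1 by rewrite inE.
  rewrite Ng1 in_setU1 in_setD1 => /orP [/eqP pe|/andP [_ pN]]; first by rewrite pe eqxx in pu.
  by rewrite pN in pNu.
have ng2p : ~~ e g2 p.
  apply/negP => h; have : p \in Nb g2 by rewrite inE.
  rewrite Ng2 in_setU1 in_setD1 => /orP [/eqP pe|/andP [_ pN]]; first by rewrite pe eqxx in pu.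
  by rewrite pN in pNu.
have npg1 : ~~ e p g1 by rewrite esym.
have npg2 : ~~ e p g2 by rewrite esym.
have nwz : ~~ e w z by rewrite esym.
have uz : u != z by rewrite eq_sym.
have uw : u != w by rewrite eq_sym.
have hq : 8 <= #|Q x|.
  apply: (Q_ge (s:=[:: (p,u);(u,p);(p,g1);(g1,p);(p,g2);(g2,p);(z,w);(w,z)])).
    by solve_uniq.
  have uNx : u \in Nb x by rewrite inE.
  have zNx : z \in Nb x by rewrite inE.
  have wNx : w \in Nb x by rewrite inE.
  have g1Nx : g1 \in Nb x by rewrite inE.
  have g2Nx : g2 \in Nb x by rewrite inE.
  rewrite /= !QP. bool_rw. neqs_rw. by rewrite ?eqxx.
move: TQ hq; rewrite dx6 /=; move: (tri x) (#|Q x|) => t q; clear; lia.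
Qed.

Lemma struct_xz u x y z w : Struct u x y z w -> e x z /\ e x w.
Proof.
move=> S. have S' := S.
case: S' => d6 [xN yN zN wN] [xy zw [xz xw yz yw]] [nxy nzw] Qs.
split; [apply: (struct_adj S xN zN xz) | apply: (struct_adj S xN wN xw)]; by notin_tac.
Qed.

Definition A := [set v | tri v == 13].

Lemma tri_bad4 u x y z w : Struct u x y z w ->
  [/\ tri x <= 11, tri y <= 11, tri z <= 11 & tri w <= 11].
Proof.
move=> S; split; apply: struct_bad.
- exact: S.
- exact: struct_sw1 S.
- exact: struct_sw2 S.
- exact: struct_sw1 (struct_sw2 S).
Qed.

Lemma R1 u : u \in A -> 4 <= #|Nb u :\: A|.
Proof.
rewrite inE => /eqP /struct_ex [x [y [z [w S]]]].
have S' := S.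
case: S' => d6 [xN yN zN wN] [xy zw [xz xw yz yw]] [nxy nzw] Qs.
have [tx ty tz tw] := tri_bad4 S.
have -> : 4 = #|[set v in [:: x; y; z; w]]| by rewrite card_uniq_set //; solve_uniq.
apply: subset_leq_card; apply/subsetP => v.
rewrite in_set !in_cons in_nil orbF => /or4P [] /eqP ->; rewrite in_setD inE ?xN ?yN ?zN ?wN andbT;
  apply/negP => /eqP h; [move: tx | move: ty | move: tz | move: tw]; by rewrite h.
Qed.

Lemma R2' u x y z w : Struct u x y z w -> 4 * tri x + #|Nb x :&: A| <= 48.
Proof.
move=> S. have S' := S.
case: S' => d6 [xN yN zN wN] [xy zw [xz xw yz yw]] [nxy nzw] Qs.
have [tx ty tz tw] := tri_bad4 S.
have [exz exw] := struct_xz S.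
have zNx : z \in Nb x by rewrite inE.
have wNx : w \in Nb x by rewrite inE.
have sub : Nb x :&: A \subset Nb x :\ z :\ w.
  apply/subsetP => v; rewrite !inE => /andP [xv /eqP tv]; rewrite xv andbT.
  apply/andP; split; apply/negP => /eqP ev; [move: tw | move: tz]; by rewrite -ev tv.
have := subset_leq_card sub.
have h1 := cardsD1 z (Nb x). have h2 := cardsD1 w (Nb x :\ z).
rewrite zNx in h1. rewrite in_setD1 wNx (eq_sym w z) zw in h2.
have hd := Hdeg x.
move: tx h1 h2 hd; move: (tri x) (#|Nb x|) (#|Nb x :\ z|) (#|Nb x :\ z :\ w|) (#|Nb x :&: A|).
move=> t d d1 d2 a; clear; lia.
Qed.

Lemma R2 v : v \notin A -> 4 * tri v + #|Nb v :&: A| <= 48.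
Proof.
move=> vA.
have t12 : tri v <= 12.
  have := tri_le13 v. move: vA; rewrite inE. move: (tri v) => t; clear; lia.
case: (boolP [exists u in Nb v, u \in A]) => H; last first.
  have -> : #|Nb v :&: A| = 0.
    apply: eq_card0 => u; rewrite !inE; apply/negP => /andP [vu uA].
    by move/negP: H; apply; apply/exists_inP; exists u; rewrite ?inE.
  move: t12; move: (tri v) => t; clear; lia.
case/exists_inP: H => u vu; rewrite inE => /eqP /struct_ex [x [y [z [w S]]]].
have vN : v \in Nb u by rewrite (Nb_sym esym).
case: (boolP (v \in [:: x; y; z; w])) => vs; last first.
  by have [_ t13] := struct_g S vN vs; move: vA; rewrite inE t13.
move: vs; rewrite !in_cons in_nil orbF => /or4P [] /eqP ->.
- exact: R2' S.
- exact: R2' (struct_sw1 S).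
- exact: R2' (struct_sw2 S).
- exact: R2' (struct_sw1 (struct_sw2 S)).
Qed.

Lemma vtx v : 4 * tri v + (v \notin A) * #|Nb v :&: A| <= 48 + (v \in A) * #|Nb v :\: A|.
Proof.
case: (boolP (v \in A)) => vA /=.
  rewrite mul0n addn0 mul1n. have := R1 vA. move: vA; rewrite inE => /eqP ->.
  move: (#|Nb v :\: A|) => k; clear; lia.
rewrite mul1n mul0n addn0. exact: R2.
Qed.

Lemma exch : \sum_v (v \notin A) * #|Nb v :&: A| = \sum_v (v \in A) * #|Nb v :\: A|.
Proof.
transitivity (\sum_v \sum_w ((v \notin A) && ((w \in Nb v) && (w \in A)) : nat)).
  apply: eq_bigr => v _; rewrite card_sumb big_distrr /=; apply: eq_bigr => w _.
  by rewrite in_setI; case: (v \in A); case: (w \in Nb v); case: (w \in A).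
transitivity (\sum_v \sum_w ((v \in A) && ((w \in Nb v) && (w \notin A)) : nat)); last first.
  apply: eq_bigr => v _; rewrite card_sumb big_distrr /=; apply: eq_bigr => w _.
  by rewrite in_setD; case: (v \in A); case: (w \in Nb v); case: (w \in A).
rewrite exchange_big /=. apply: eq_bigr => v _; apply: eq_bigr => w _.
by rewrite (Nb_sym esym v w); case: (v \in A); case: (w \in Nb v); case: (w \in A).
Qed.

Lemma main_bound : 12 * k_t e 3 <= 48 * #|T|.
Proof.
have H : \sum_v (4 * tri v + (v \notin A) * #|Nb v :&: A|) <=
         \sum_v (48 + (v \in A) * #|Nb v :\: A|).
  by apply: leq_sum => v _; exact: vtx.
rewrite big_split [X in _ <= X]big_split /= in H.
rewrite exch -big_distrr /= sum_tri // sum_nat_const in H.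
move: H; rewrite [#|xpredT|](_ : _ = #|T|) //.
move: (k_t e 3) (#|T|) (\sum_(v : T) (v \in A) * #|Nb v :\: A|) => k n s; clear; lia.
Qed.

End K.

Lemma cardI (n : nat) (A : {pred 'I_n}) (P : nat -> bool) :
  (forall y : 'I_n, (y \in A) = P y) -> #|A| = \sum_(0 <= i < n) P i.
Proof.
move=> H. rewrite card_sumb (eq_bigr (fun y : 'I_n => (P y : nat))); last by move=> y _; rewrite H.
by rewrite big_mkord.
Qed.

Lemma T84_sym : symmetric T84_rel.
Proof. by move=> x y; rewrite /T84_rel eq_sym. Qed.

Lemma T84_irr : irreflexive T84_rel.
Proof. by move=> x; rewrite /T84_rel eqxx. Qed.

Lemma T84_deg (x : 'I_8) : #|[set y | T84_rel x y]| = 6.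
Proof.
rewrite (@cardI 8 _ (fun i => x %/ 2 != i %/ 2)); last by move=> y; rewrite inE.
case: x => m /=.
do 8 (case: m => [|m]; first by move=> _; rewrite unlock; vm_compute).
by [].
Qed.

Lemma T84_tri (u : 'I_8) : tri T84_rel u = 12.
Proof.
have H := two_tri T84_sym T84_irr u.
have E : \sum_(a in Nb T84_rel u) #|Nb T84_rel u :&: Nb T84_rel a| =
   \sum_(0 <= a < 8) (u %/ 2 != a %/ 2) * \sum_(0 <= i < 8) ((u %/ 2 != i %/ 2) && (a %/ 2 != i %/ 2)).
  rewrite big_mkcond /= big_mkord. apply: eq_bigr => a _.
  rewrite (@cardI 8 _ (fun i => (u %/ 2 != i %/ 2) && (a %/ 2 != i %/ 2))); last by move=> y; rewrite !inE.
  by rewrite inE /T84_rel; case: (u %/ 2 != a %/ 2); rewrite ?mul1n ?mul0n.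
rewrite E in H. move: H. clear E.
case: u => m /= Hm.
have -> : \sum_(0 <= a < 8) (m %/ 2 != a %/ 2) * \sum_(0 <= i < 8) ((m %/ 2 != i %/ 2) && (a %/ 2 != i %/ 2)) = 24.
  move: Hm; do 8 (case: m => [|m]; first by move=> _; rewrite unlock; vm_compute).
  by [].
move: (tri T84_rel (Ordinal Hm)) => t; clear; lia.
Qed.

Lemma T84_k3 : k_t T84_rel 3 = 32.
Proof.
have H := sum_tri T84_rel.
rewrite (eq_bigr (fun _ => 12)) in H; last by move=> u _; exact: T84_tri.
rewrite sum_nat_const card_ord in H.
move: H; move: (k_t T84_rel 3) => k; clear; lia.
Qed.

Lemma T84_class : in_class T84_rel 6 5.
Proof.
split; first by split; [exact: T84_sym | exact: T84_irr].
split; first by move=> x; rewrite T84_deg.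
split; last by rewrite card_ord.
move=> S cS.
pose f := fun y : 'I_8 => (inord (y %/ 2) : 'I_4).
have inj : {in S &, injective f}.
  move=> y y' yS y'S E. apply/eqP; case: (boolP (y == y')) => // yy.
  have := cliqueP _ _ cS y y' yS y'S yy.
  rewrite /T84_rel. move: E; rewrite /f => /(f_equal (@nat_of_ord 4)).
  rewrite !inordK; last 2 first.
  - by case: y' {yS y'S yy} => m /=; move: m; clear; lia.
  - by case: y {yS y'S yy} => m /=; move: m; clear; lia.
  by move=> ->; rewrite eqxx.
rewrite -(card_in_imset inj).
apply: leq_trans (max_card _) _. by rewrite card_ord.
Qed.

Local Open Scope ring_scope.

Lemma rho_T84 : rho_t T84_rel 3 = 4%:R.
Proof.
rewrite /rho_t T84_k3 card_ord.
have -> : (32%:R : rat) = 4%:R * 8%:R by rewrite -natrM.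
by rewrite mulfK.
Qed.

Lemma upper (T : finType) (e : rel T) : in_class e 6 5 -> (rho_t e 3 <= 4%:R)%R.
Proof.
case=> [[esym eirr] [Hdeg [Hcl n0]]].
have H := main_bound esym eirr Hdeg Hcl.
rewrite /rho_t ler_pdivrMr ?ltr0n // -natrM ler_nat.
move: H n0; move: (k_t e 3) (#|T|) => k n; clear; lia.
Qed.

Theorem mainTheorem20 :
  is_f_t 3 6 5 (4%:R)%R /\ rho_t T84_rel 3 = (4%:R)%R.
Proof.
split; last exact: rho_T84.
split; first by move=> T e; exact: upper.
move=> r' H. rewrite -rho_T84. apply: H. exact: T84_class.
Qed.
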